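(* For every Turing degree $\mathbf{d}$ there exist a finite alphabet $\Sigma$ and a minimal subshift $X \subseteq \Sigma^{\mathbb{Z}}$ such that the set $\{\deg_T x : x \in X\}$ of Turing degrees of the points of $X$ equals the cone $\{\mathbf{e} : \mathbf{e} \geq_T \mathbf{d}\}$.
   Context: For a finite alphabet $\Sigma$, the shift maps $\sigma_v$ on $\Sigma^{\mathbb{Z}^d}$ are defined by $\sigma_v(c)_x = c_{x+v}$; $\Sigma^{\mathbb{Z}^d}$ carries the product (Cantor) topology. A subshift is a closed subset of $\Sigma^{\mathbb{Z}^d}$ invariant under all shifts; its elements are called points. A subshift $X$ is minimal if it is nonempty and contains no nonempty subshift $Y \subsetneq X$ (equivalently, all points of $X$ contain the same finite patterns; equivalently, $X$ is the orbit closure of each of its points). The Turing degree of a point of $\Sigma^{\mathbb{Z}^d}$ is the Turing degree of the sequence obtained by listing its values along a fixed computable bijection $\mathbb{N} \to \mathbb{Z}^d$ (with symbols coded by a fixed computable coding). The cone above $\mathbf{d}$ is the set of degrees $\geq_T \mathbf{d}$. *)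

(* Defs.v *)
From Stdlib Require Import ZArith Arith List.
Import ListNotations.
Open Scope Z_scope.

Inductive rfun : Type :=
| RZero : rfun
| RSucc : rfun
| RProj : nat -> rfun
| ROracle : rfun
| RComp : rfun -> list rfun -> rfun
| RPrec : rfun -> rfun -> rfun
| RMu : rfun -> rfun.

Inductive eval (o : nat -> nat) : rfun -> list nat -> nat -> Prop :=
| ev_zero v : eval o RZero v 0
| ev_succ x v : eval o RSucc (x :: v) (S x)
| ev_proj i v : (i < length v)%nat -> eval o (RProj i) v (nth i v 0%nat)
| ev_oracle x v : eval o ROracle (x :: v) (o x)
| ev_comp f gs v ys y :
    evals o gs v ys -> eval o f ys y -> eval o (RComp f gs) v y
| ev_prec0 f g v y : eval o f v y -> eval o (RPrec f g) (0%nat :: v) y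
| ev_precS f g n v r y :
    eval o (RPrec f g) (n :: v) r -> eval o g (n :: r :: v) y ->
    eval o (RPrec f g) (S n :: v) y
| ev_mu f v n :
    eval o f (n :: v) 0%nat ->
    (forall m, (m < n)%nat -> exists k, eval o f (m :: v) (S k)) ->
    eval o (RMu f) v n
with evals (o : nat -> nat) : list rfun -> list nat -> list nat -> Prop :=
| evs_nil v : evals o [] v []
| evs_cons g gs v y ys :
    eval o g v y -> evals o gs v ys -> evals o (g :: gs) v (y :: ys).

Definition turing_le (A B : nat -> nat) : Prop :=
  exists p : rfun, forall n : nat, eval B p [n] (A n).

Definition turing_eq (A B : nat -> nat) : Prop :=
  turing_le A B /\ turing_le B A.

Definition config := Z -> nat.

Definition in_fullshift (k : nat) (c : config) : Prop :=
  forall z : Z, (c z < k)%nat.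

Definition shift (v : Z) (c : config) : config := fun x => c (x + v).

(** Product (Cantor) topology: X is closed in {0..k-1}^Z iff every point
    of the full shift all of whose central windows [-n,n] occur in points of
    X belongs to X. *)
Definition closed_set (k : nat) (X : config -> Prop) : Prop :=
  forall c : config, in_fullshift k c ->
    (forall n : nat, exists d : config, X d /\
        forall z : Z, - Z.of_nat n <= z <= Z.of_nat n -> d z = c z) ->
    X c.

Definition subshift (k : nat) (X : config -> Prop) : Prop :=
  (forall c, X c -> in_fullshift k c) /\
  closed_set k X /\
  (forall (v : Z) (c : config), X c -> X (shift v c)).

Definition minimal_subshift (k : nat) (X : config -> Prop) : Prop :=
  subshift k X /\ (exists c, X c) /\
  forall Y : config -> Prop, subshift k Y -> (exists c, Y c) ->
    (forall c, Y c -> X c) -> forall c, X c -> Y c.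

(** Fixed computable bijection nat -> Z: 0,-1,1,-2,2,... *)
Definition zenum (n : nat) : Z :=
  if Nat.even n then Z.of_nat (n / 2) else - Z.of_nat ((n + 1) / 2).

(** The sequence of values of c listed along zenum (symbols coded by
    themselves). Its Turing degree is the Turing degree of c. *)
Definition code (c : config) : nat -> nat := fun n => c (zenum n).

(* Main.v *)
Require Import Defs.
From Stdlib Require Import ZArith Arith List Lia Cantor ClassicalEpsilon Classical.
Import ListNotations.
Open Scope nat_scope.

Scheme eval_mut := Induction for eval Sort Prop
  with evals_mut := Induction for evals Sort Prop.

Fixpoint osub (q : rfun) (p : rfun) : rfun :=
  match p with
  | ROracle => RComp q [RProj 0]
  | RComp f gs => RComp (osub q f)
      ((fix go (l : list rfun) : list rfun :=
          match l with [] => [] | g :: l' => osub q g :: go l' end) gs)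
  | RPrec f g => RPrec (osub q f) (osub q g)
  | RMu f => RMu (osub q f)
  | x => x
  end.

Fixpoint osubl (q : rfun) (l : list rfun) : list rfun :=
  match l with [] => [] | g :: l' => osub q g :: osubl q l' end.

Lemma osub_comp q f gs : osub q (RComp f gs) = RComp (osub q f) (osubl q gs).
Proof. simpl. f_equal. induction gs; simpl; congruence. Qed.

Fixpoint osub_ok (o B : nat -> nat) (q : rfun) (Hq : forall x, eval o q [x] (B x))
  p v y (H : eval B p v y) {struct H} : eval o (osub q p) v y
with osubs_ok (o B : nat -> nat) (q : rfun) (Hq : forall x, eval o q [x] (B x))
  gs v ys (H : evals B gs v ys) {struct H} : evals o (osubl q gs) v ys.
Proof.
  - destruct H; simpl.
    + constructor.
    + constructor.
    + constructor; auto.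
    + econstructor. econstructor. constructor. simpl; lia. constructor. apply Hq.
    + replace ((fix go (l : list rfun) : list rfun :=
          match l with [] => [] | g :: l' => osub q g :: go l' end) gs) with (osubl q gs).
      econstructor. 2: apply (osub_ok o B q Hq _ _ _ H0).
      apply (osubs_ok o B q Hq _ _ _ H). clear. induction gs; simpl; congruence.
    + constructor. apply (osub_ok o B q Hq _ _ _ H).
    + econstructor. apply (osub_ok o B q Hq _ _ _ H). apply (osub_ok o B q Hq _ _ _ H0).
    + constructor. apply (osub_ok o B q Hq _ _ _ H).
      intros m Hm. destruct (H0 m Hm) as [k Hk]. exists k. apply (osub_ok o B q Hq _ _ _ Hk).
  - destruct H; simpl.
    + constructor.
    + constructor. apply (osub_ok o B q Hq _ _ _ H). apply (osubs_ok o B q Hq _ _ _ H0).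
Qed.

Definition CompOn (o : nat -> nat) (k : nat) (P : list nat -> Prop) (f : list nat -> nat) :=
  exists p, forall v, length v = k -> P v -> eval o p v (f v).

Definition Comp o k f := CompOn o k (fun _ => True) f.

Lemma comp_ext o k P Q f g : CompOn o k P f ->
  (forall v, length v = k -> Q v -> P v /\ f v = g v) -> CompOn o k Q g.
Proof.
  intros [p Hp] H. exists p. intros v Hl Hv. destruct (H v Hl Hv) as [H1 H2].
  rewrite <- H2. auto.
Qed.


Lemma comp_reduce o B k P f : (exists q, forall x, eval o q [x] (B x)) ->
  CompOn B k P f -> CompOn o k P f.
Proof.
  intros [q Hq] [p Hp]. exists (osub q p). intros. apply osub_ok with B; auto.
Qed.

Fixpoint cst (n : nat) : rfun := match n with 0 => RZero | S n => RComp RSucc [cst n] end.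

Lemma cst_ok o n v : eval o (cst n) v n.
Proof.
  induction n; simpl. constructor. econstructor. econstructor. eauto. constructor. constructor.
Qed.

Lemma comp_const o k n : Comp o k (fun _ => n).
Proof. exists (cst n). intros. apply cst_ok. Qed.

Lemma comp_proj o k i : i < k -> Comp o k (fun v => nth i v 0).
Proof. intros Hi. exists (RProj i). intros v Hl _. constructor. lia. Qed.

Lemma comp_succ o : Comp o 1 (fun v => S (hd 0 v)).
Proof. exists RSucc. intros [|x [|]] Hl _; simpl in *; try lia. constructor. Qed.

Lemma comp_oracle o : Comp o 1 (fun v => o (hd 0 v)).
Proof. exists ROracle. intros [|x [|]] Hl _; simpl in *; try lia. constructor. Qed.

Lemma comp_list o m k Pf Q f (gs : list (list nat -> nat)) :
  CompOn o m Pf f -> length gs = m -> Forall (fun g => CompOn o k Q g) gs ->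
  CompOn o k (fun v => Q v /\ Pf (map (fun g => g v) gs)) (fun v => f (map (fun g => g v) gs)).
Proof.
  intros [pf Hf] Hlen Hgs.
  assert (exists ps, forall v, length v = k -> Q v -> evals o ps v (map (fun g => g v) gs)) as [ps Hps].
  { clear Hlen. induction Hgs as [|g gs [pg Hg] _ [ps Hps]].
    - exists []. intros. constructor.
    - exists (pg :: ps). intros. simpl. constructor; auto. }
  exists (RComp pf ps). intros v Hl [HQ HP]. econstructor. apply Hps; auto.
  apply Hf; auto. rewrite length_map; auto.
Qed.

Fixpoint primrec (f : list nat -> nat) (g : list nat -> nat) (n : nat) (w : list nat) : nat :=
  match n with 0 => f w | S n => g (n :: primrec f g n w :: w) end.

Lemma comp_prec o k Pf Pg f g : CompOn o k Pf f -> CompOn o (S (S k)) Pg g ->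
  CompOn o (S k) (fun v => Pf (tl v) /\ forall m, m < hd 0 v -> Pg (m :: primrec f g m (tl v) :: tl v))
    (fun v => primrec f g (hd 0 v) (tl v)).
Proof.
  intros [pf Hf] [pg Hg]. exists (RPrec pf pg).
  intros [|n w] Hl [H1 H2]; simpl in *; try lia. injection Hl as Hl.
  induction n; simpl.
  - constructor. auto.
  - econstructor. apply IHn. intros; apply H2; lia. apply Hg. simpl; lia. apply H2; lia.
Qed.

Lemma comp_mu o k Pf Q f h : CompOn o (S k) Pf f ->
  (forall v, length v = k -> Q v -> (forall n, n <= h v -> Pf (n :: v)) /\
     f (h v :: v) = 0 /\ forall m, m < h v -> f (m :: v) <> 0) -> CompOn o k Q h.
Proof.
  intros [pf Hf] H. exists (RMu pf). intros v Hl HQ. destruct (H v Hl HQ) as (H1 & H2 & H3).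
  constructor.
  - rewrite <- H2. apply Hf. simpl; lia. apply H1; lia.
  - intros m Hm. destruct (f (m :: v)) eqn:E. exfalso; eapply H3; eauto.
    exists n. rewrite <- E. apply Hf. simpl; lia. apply H1; lia.
Qed.

Lemma least_ex (P : nat -> Prop) : (forall n, P n \/ ~ P n) -> (exists n, P n) ->
  exists n, P n /\ forall m, m < n -> ~ P m.
Proof.
  intros Hd [n Hn]. revert Hn. induction n as [n IH] using lt_wf_ind. intros Hn.
  assert (Hor: (exists m, m < n /\ P m) \/ ~ (exists m, m < n /\ P m)).
  { clear IH Hn. induction n. right. intros [m [Hm _]]; lia.
    destruct IHn as [[m [Hm Pm]]|Hno]. left; exists m; split; auto; lia.
    destruct (Hd n). left; exists n; split; auto.
    right. intros [m [Hm Pm]]. destruct (Nat.eq_dec m n). subst; auto. apply Hno; exists m; split; auto; lia. }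
  destruct Hor as [[m [Hm Pm]]|Hno]. apply (IH m Hm Pm).
  exists n; split; auto. intros m Hm Pm; apply Hno; eauto.
Qed.

Lemma comp_mu_ex o k Pf Q f : CompOn o (S k) Pf f ->
  (forall v, length v = k -> Q v -> (forall n, Pf (n :: v)) /\ exists n, f (n :: v) = 0) ->
  exists h, CompOn o k Q h /\ forall v, length v = k -> Q v -> f (h v :: v) = 0.
Proof.
  intros Hf H.
  set (h := fun v => epsilon (inhabits 0) (fun n => f (n :: v) = 0 /\ forall m, m < n -> f (m :: v) <> 0)).
  assert (Hh : forall v, length v = k -> Q v -> f (h v :: v) = 0 /\ forall m, m < h v -> f (m :: v) <> 0).
  { intros v Hl HQ. destruct (H v Hl HQ) as [_ Hex]. unfold h. apply epsilon_spec.
    apply least_ex; auto. intros n; destruct (Nat.eq_dec (f (n :: v)) 0); auto. }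
  exists h. split; [|intros; apply Hh; auto].
  apply comp_mu with Pf f; auto. intros v Hl HQ. destruct (H v Hl HQ) as [H1 _].
  destruct (Hh v Hl HQ). repeat split; auto.
Qed.

Lemma cproj o k Q i : i < k -> CompOn o k Q (fun v => nth i v 0).
Proof. intros. eapply comp_ext. apply comp_proj; eauto. simpl; auto. Qed.

Lemma cconst o k Q n : CompOn o k Q (fun _ => n).
Proof. eapply comp_ext. apply comp_const. simpl; auto. Qed.

Lemma tc1 o k Q (F : nat -> nat) g : Comp o 1 (fun v => F (hd 0 v)) -> CompOn o k Q g ->
  CompOn o k Q (fun v => F (g v)).
Proof.
  intros H1 H2. eapply comp_ext. apply (comp_list o 1 k _ Q _ [g] H1 eq_refl).
  repeat constructor; auto. simpl. auto.
Qed.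

Lemma tc2 o k Q (F : nat -> nat -> nat) g1 g2 : Comp o 2 (fun v => F (nth 0 v 0) (nth 1 v 0)) ->
  CompOn o k Q g1 -> CompOn o k Q g2 -> CompOn o k Q (fun v => F (g1 v) (g2 v)).
Proof.
  intros H1 H2 H3. eapply comp_ext. apply (comp_list o 2 k _ Q _ [g1; g2] H1 eq_refl).
  repeat constructor; auto. simpl. auto.
Qed.

Lemma tc3 o k Q (F : nat -> nat -> nat -> nat) g1 g2 g3 :
  Comp o 3 (fun v => F (nth 0 v 0) (nth 1 v 0) (nth 2 v 0)) ->
  CompOn o k Q g1 -> CompOn o k Q g2 -> CompOn o k Q g3 -> CompOn o k Q (fun v => F (g1 v) (g2 v) (g3 v)).
Proof.
  intros H1 H2 H3 H4. eapply comp_ext. apply (comp_list o 3 k _ Q _ [g1; g2; g3] H1 eq_refl).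
  repeat constructor; auto. simpl. auto.
Qed.

Lemma ctc1 o k Q g : CompOn o k Q g -> CompOn o k Q (fun v => o (g v)).
Proof. intros. apply tc1; auto. apply comp_oracle. Qed.

Lemma len1 (v : list nat) : length v = 1 -> v = [hd 0 v].
Proof. destruct v as [|x [|]]; simpl; intros; auto; lia. Qed.
Lemma len2 (v : list nat) : length v = 2 -> v = [nth 0 v 0; nth 1 v 0].
Proof. destruct v as [|x [|y [|]]]; simpl; intros; auto; lia. Qed.
Lemma len3 (v : list nat) : length v = 3 -> v = [nth 0 v 0; nth 1 v 0; nth 2 v 0].
Proof. destruct v as [|x [|y [|z [|]]]]; simpl; intros; auto; lia. Qed.

Lemma cprec1 o (F : nat -> nat -> nat) (f : nat -> nat) (g : nat -> nat -> nat -> nat) :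
  Comp o 1 (fun v => f (hd 0 v)) ->
  Comp o 3 (fun v => g (nth 0 v 0) (nth 1 v 0) (nth 2 v 0)) ->
  (forall y, F 0 y = f y) -> (forall n y, F (S n) y = g n (F n y) y) ->
  Comp o 2 (fun v => F (nth 0 v 0) (nth 1 v 0)).
Proof.
  intros Hf Hg H0 HS. eapply comp_ext. apply (comp_prec o 1 _ _ _ _ Hf Hg).
  intros v Hl _. rewrite (len2 v Hl). simpl. split. auto.
  induction (nth 0 v 0); simpl. auto. rewrite IHn. auto.
Qed.

Lemma cprec0 o (F : nat -> nat) (f : nat) (g : nat -> nat -> nat) :
  Comp o 2 (fun v => g (nth 0 v 0) (nth 1 v 0)) ->
  F 0 = f -> (forall n, F (S n) = g n (F n)) ->
  Comp o 1 (fun v => F (hd 0 v)).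
Proof.
  intros Hg H0 HS. eapply comp_ext. apply (comp_prec o 0 _ _ (fun _ => f) _ (comp_const o 0 f) Hg).
  intros v Hl _. rewrite (len1 v Hl). simpl. split. auto.
  induction (hd 0 v); simpl. auto. rewrite IHn. auto.
Qed.

Lemma c_pred o : Comp o 1 (fun v => pred (hd 0 v)).
Proof.
  apply (cprec0 o pred 0 (fun n r => n)). apply comp_proj; lia. auto. auto.
Qed.

Lemma c_add o : Comp o 2 (fun v => nth 0 v 0 + nth 1 v 0).
Proof.
  apply (cprec1 o Nat.add (fun y => y) (fun n r y => S r)).
  eapply comp_ext. apply comp_proj with (i := 0); lia. intros v Hl _; rewrite (len1 v Hl); auto.
  apply tc1. apply comp_succ. apply cproj; lia. auto. auto.
Qed.

Lemma c_mul o : Comp o 2 (fun v => nth 0 v 0 * nth 1 v 0).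
Proof.
  apply (cprec1 o Nat.mul (fun y => 0) (fun n r y => y + r)).
  apply comp_const. apply tc2. apply c_add. apply cproj; lia. apply cproj; lia.
  auto. intros; simpl; lia.
Qed.

Lemma c_subr o : Comp o 2 (fun v => nth 1 v 0 - nth 0 v 0).
Proof.
  apply (cprec1 o (fun n y => y - n) (fun y => y) (fun n r y => pred r)).
  eapply comp_ext. apply comp_proj with (i := 0); lia. intros v Hl _; rewrite (len1 v Hl); auto.
  apply tc1. apply c_pred. apply cproj; lia. intros; lia. intros; lia.
Qed.

Lemma c_sub o : Comp o 2 (fun v => nth 0 v 0 - nth 1 v 0).
Proof.
  apply (tc2 o 2 (fun _ => True) (fun a b => b - a) (fun v => nth 1 v 0) (fun v => nth 0 v 0)).
  apply c_subr. apply cproj; lia. apply cproj; lia.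
Qed.

Lemma c_ifz o : Comp o 3 (fun v => match nth 0 v 0 with 0 => nth 1 v 0 | _ => nth 2 v 0 end).
Proof.
  eapply comp_ext. apply (comp_prec o 2 (fun _ => True) (fun _ => True) (fun w => nth 0 w 0) (fun u => nth 3 u 0)).
  apply comp_proj; lia. apply comp_proj; lia.
  intros v Hl _. rewrite (len3 v Hl). simpl. split. auto. destruct (nth 0 v 0); auto.
Qed.

Lemma c_pow2 o : Comp o 1 (fun v => 2 ^ (hd 0 v)).
Proof.
  apply (cprec0 o (fun n => 2 ^ n) 1 (fun n r => r + r)). apply tc2. apply c_add. apply cproj; lia. apply cproj; lia.
  auto. intros; simpl; lia.
Qed.

Definition eqn (x y : nat) := 1 - ((x - y) + (y - x)).
Lemma eqn_spec x y : eqn x y = if Nat.eqb x y then 1 else 0.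
Proof. unfold eqn. destruct (Nat.eqb_spec x y); lia. Qed.

Lemma c_eqn o : Comp o 2 (fun v => eqn (nth 0 v 0) (nth 1 v 0)).
Proof.
  unfold eqn. apply tc2 with (F := fun a b => 1 - ((a - b) + (b - a))); [|apply cproj; lia|apply cproj; lia].
  apply tc2 with (F := Nat.sub). apply c_sub. apply cconst.
  apply tc2 with (F := Nat.add). apply c_add.
  apply tc2 with (F := Nat.sub). apply c_sub. apply cproj; lia. apply cproj; lia.
  apply tc2 with (F := Nat.sub). apply c_sub. apply cproj; lia. apply cproj; lia.
Qed.

Lemma c_divp o : Comp o 2 (fun v => nth 0 v 0 / 2 ^ (nth 1 v 0)).
Proof.
  apply comp_mu with (fun _ => True) (fun u => (nth 1 u 0 + 1) - (nth 0 u 0 + 1) * 2 ^ (nth 2 u 0)).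
  - apply tc2 with (F := Nat.sub). apply c_sub.
    apply tc2 with (F := Nat.add). apply c_add. apply cproj; lia. apply cconst.
    apply tc2 with (F := Nat.mul). apply c_mul.
    apply tc2 with (F := Nat.add). apply c_add. apply cproj; lia. apply cconst.
    apply tc1 with (F := fun a => 2 ^ a). apply c_pow2. apply cproj; lia.
  - intros v Hl _. simpl. split; auto. set (x := nth 0 v 0). set (M := 2 ^ nth 1 v 0).
    assert (HM : M <> 0) by (apply Nat.pow_nonzero; lia).
    pose proof (Nat.div_mod x M HM). pose proof (Nat.mod_upper_bound x M HM).
    split. nia. intros m Hm. nia.
Qed.

Lemma c_modp o : Comp o 2 (fun v => nth 0 v 0 mod 2 ^ (nth 1 v 0)).
Proof.
  eapply comp_ext.
  apply tc2 with (F := Nat.sub) (g1 := fun v => nth 0 v 0)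
     (g2 := fun v => 2 ^ nth 1 v 0 * (nth 0 v 0 / 2 ^ nth 1 v 0)).
  apply c_sub. apply cproj; lia. apply tc2 with (F := Nat.mul). apply c_mul.
  apply tc1 with (F := fun a => 2 ^ a). apply c_pow2. apply cproj; lia. apply c_divp.
  intros v _ _. split; auto. assert (2 ^ nth 1 v 0 <> 0) by (apply Nat.pow_nonzero; lia).
  pose proof (Nat.div_mod (nth 0 v 0) _ H). lia.
Qed.

Lemma c_tri o : Comp o 1 (fun v => nat_rec _ 0 (fun i m => S i + m) (hd 0 v)).
Proof.
  apply (cprec0 o (fun n => nat_rec _ 0 (fun i m => S i + m) n) 0 (fun n r => S n + r)). apply tc2. apply c_add.
  apply tc1. apply comp_succ. apply cproj; lia. apply cproj; lia. auto. auto.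
Qed.

Lemma c_pair o : Comp o 2 (fun v => to_nat (nth 0 v 0, nth 1 v 0)).
Proof.
  unfold to_nat. apply tc2 with (F := Nat.add). apply c_add. apply cproj; lia.
  apply tc1 with (F := fun a => nat_rec _ 0 (fun i m => S i + m) a). apply c_tri.
  apply tc2 with (F := Nat.add). apply c_add. apply cproj; lia. apply cproj; lia.
Qed.

Definition P2 (j : nat) : Z := Z.of_nat (2 ^ j).

Lemma pow2_pos j : 0 < 2 ^ j.
Proof. apply Nat.neq_0_lt_0, Nat.pow_nonzero; lia. Qed.

Lemma P2_pos j : (0 < P2 j)%Z.
Proof. unfold P2. pose proof (pow2_pos j). lia. Qed.

Lemma P2_S j : P2 (S j) = (2 * P2 j)%Z.
Proof. unfold P2. rewrite Nat.pow_succ_r'. lia. Qed.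

Lemma natmod_mul (x a b : nat) : 0 < a -> 0 < b -> (x mod (a * b)) mod a = x mod a.
Proof.
  intros Ha Hb. rewrite (Nat.div_mod x (a * b)) at 2 by lia.
  replace (a * b * (x / (a * b)) + x mod (a * b)) with (x mod (a * b) + (b * (x / (a * b))) * a) by lia.
  rewrite Nat.Div0.mod_add. auto.
Qed.

Lemma natmod_S x j : (x mod 2 ^ S j) mod 2 ^ j = x mod 2 ^ j.
Proof. rewrite Nat.pow_succ_r', Nat.mul_comm. apply natmod_mul. apply pow2_pos. lia. Qed.

Lemma natmod_le x i j : i <= j -> (x mod 2 ^ j) mod 2 ^ i = x mod 2 ^ i.
Proof.
  intros H. replace j with (i + (j - i)) by lia. rewrite Nat.pow_add_r.
  apply natmod_mul; apply pow2_pos.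
Qed.

Lemma Zcong (a b M : Z) : (0 < M -> (a mod M = b mod M <-> exists k, a = b + k * M))%Z.
Proof.
  intros HM. split.
  - intros H. exists (a / M - b / M)%Z. pose proof (Z.div_mod a M). pose proof (Z.div_mod b M). nia.
  - intros [k ->]. rewrite Z.mod_add; lia.
Qed.

Lemma Zmod_small_iff (a R M : Z) : (0 < M -> 0 <= R < M -> (a mod M = R <-> a mod M = R mod M))%Z.
Proof. intros. rewrite (Z.mod_small R M); tauto. Qed.

Definition resid (r : nat -> nat) := forall j, r j < 2 ^ j /\ r (S j) mod 2 ^ j = r j.

Definition cls (r : nat -> nat) (z : Z) (j : nat) := (z mod P2 j)%Z = Z.of_nat (r j).
Definition lvl (r : nat -> nat) (z : Z) (j : nat) := cls r z j /\ ~ cls r z (S j).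

Definition a_of (b : nat -> nat) (L : nat) : nat :=
  if Nat.even L then 2 else if Nat.even (L / 2) then b (L / 4) else 1 - b (L / 4).

Definition toep (b : nat -> nat) (r : nat -> nat) (c : config) :=
  forall j z, lvl r z j -> c z = a_of b j.

Definition XT (b : nat -> nat) (c : config) :=
  in_fullshift 3 c /\ exists r, resid r /\ toep b r c.

Definition bits (b : nat -> nat) := forall i, b i <= 1.

Lemma resid_le r i j : resid r -> i <= j -> r j mod 2 ^ i = r i.
Proof.
  intros Hr Hij. induction Hij.
  - apply Nat.mod_small, Hr.
  - rewrite <- (natmod_le (r (S m)) i m) by auto. destruct (Hr m) as [_ ->]. auto.
Qed.

Lemma resid0 r : resid r -> r 0 = 0.
Proof. intros Hr. destruct (Hr 0) as [H _]. simpl in H. lia. Qed.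

Lemma cls_nat r (w : nat) j : cls r (Z.of_nat w) j <-> w mod 2 ^ j = r j.
Proof. unfold cls, P2. rewrite <- Nat2Z.inj_mod. lia. Qed.

Lemma cls_down r z i j : resid r -> i <= j -> cls r z j -> cls r z i.
Proof.
  intros Hr Hij H. unfold cls in *.
  rewrite <- (Z.mod_mod_divide z (P2 j) (P2 i)).
  - rewrite H. unfold P2. rewrite <- Nat2Z.inj_mod. f_equal. apply resid_le; auto.
  - unfold P2. exists (Z.of_nat (2 ^ (j - i))). rewrite <- Nat2Z.inj_mul. f_equal.
    rewrite <- Nat.pow_add_r. f_equal. lia.
Qed.

Lemma cls0 r z : resid r -> cls r z 0.
Proof. intros Hr. unfold cls, P2. rewrite (resid0 r Hr). simpl. apply Z.mod_1_r. Qed.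

Lemma lvl_exists r z J : resid r -> ~ cls r z J -> exists L, L < J /\ lvl r z L.
Proof.
  intros Hr. induction J; intros H.
  - exfalso. apply H, cls0, Hr.
  - destruct (classic (cls r z J)) as [HJ|HJ].
    + exists J. split. lia. split; auto.
    + destruct (IHJ HJ) as [L [HL1 HL2]]. exists L. split; auto.
Qed.

Lemma lvl_unique r z L L' : resid r -> lvl r z L -> lvl r z L' -> L = L'.
Proof.
  intros Hr [H1 H2] [H1' H2'].
  destruct (Nat.lt_trichotomy L L') as [H|[H|H]]; auto.
  - exfalso. apply H2. eapply cls_down; eauto.
  - exfalso. apply H2'. eapply cls_down; eauto.
Qed.

Lemma a_of_lt3 b L : bits b -> a_of b L < 3.
Proof. intros Hb. unfold a_of. destruct (Nat.even L). lia. specialize (Hb (L/4)). destruct (Nat.even (L/2)); lia. Qed.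

Lemma a_of_even b L : Nat.even L = true -> a_of b L = 2.
Proof. unfold a_of. intros ->. auto. Qed.

Lemma a_of_odd b L : bits b -> Nat.even L = false -> a_of b L <= 1.
Proof. intros Hb. unfold a_of. intros ->. specialize (Hb (L/4)). destruct (Nat.even (L/2)); lia. Qed.

Lemma a_neq b j : bits b -> a_of b j <> a_of b (S j).
Proof.
  intros Hb. destruct (Nat.even j) eqn:E.
  - rewrite (a_of_even b j E). pose proof (a_of_odd b (S j) Hb). rewrite Nat.even_succ, <- Nat.negb_even, E in H. simpl in H. lia.
  - pose proof (a_of_odd b j Hb E). rewrite (a_of_even b (S j)). lia. rewrite Nat.even_succ, <- Nat.negb_even, E. auto.
Qed.

Lemma even_2m1 m : Nat.even (1 + 2 * m) = false.
Proof. rewrite Nat.even_add_mul_2. reflexivity. Qed.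
Lemma even_2m m : Nat.even (2 * m) = true.
Proof. rewrite Nat.even_mul. reflexivity. Qed.

Lemma a_of_4 b m : a_of b (4 * m + 1) = b m.
Proof.
  unfold a_of.
  assert (E1 : Nat.even (4 * m + 1) = false) by (replace (4*m+1) with (1 + 2*(2*m)) by lia; apply even_2m1).
  assert (E2 : (4 * m + 1) / 2 = 2 * m) by (symmetry; apply Nat.div_unique with 1; lia).
  assert (E3 : (4 * m + 1) / 4 = m) by (symmetry; apply Nat.div_unique with 1; lia).
  rewrite E1, E2, E3, even_2m. auto.
Qed.

Lemma a_of_4' b m : a_of b (4 * m + 3) = 1 - b m.
Proof.
  unfold a_of.
  assert (E1 : Nat.even (4 * m + 3) = false) by (replace (4*m+3) with (1 + 2*(2*m+1)) by lia; apply even_2m1).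
  assert (E2 : (4 * m + 3) / 2 = 1 + 2 * m) by (symmetry; apply Nat.div_unique with 1; lia).
  assert (E3 : (4 * m + 3) / 4 = m) by (symmetry; apply Nat.div_unique with 3; lia).
  rewrite E1, E2, E3, even_2m1. auto.
Qed.

Lemma a_of_2m b m : a_of b (2 * m) = 2.
Proof. apply a_of_even. apply even_2m. Qed.

Definition flip (M R : nat) := if R <? M then R + M else R - M.

Lemma flip_props M R : 0 < M -> R < 2 * M ->
  flip M R < 2 * M /\ flip M R <> R /\ flip M R mod M = R mod M.
Proof.
  intros HM HR. unfold flip. destruct (Nat.ltb_spec R M).
  - split. lia. split. lia. replace (R + M) with (R + 1 * M) by lia. apply Nat.Div0.mod_add.
  - split. lia. split. lia. replace R with ((R - M) + 1 * M) at 2 by lia. rewrite Nat.Div0.mod_add. auto.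
Qed.

Definition pos (r : nat -> nat) (L : nat) := flip (2 ^ L) (r (S L)).

Lemma pos_lvl r L : resid r -> lvl r (Z.of_nat (pos r L)) L /\ pos r L < 2 ^ S L.
Proof.
  intros Hr. destruct (Hr (S L)) as [H1 H2].
  rewrite Nat.pow_succ_r' in H1.
  destruct (flip_props (2 ^ L) (r (S L)) (pow2_pos L) H1) as (F1 & F2 & F3).
  unfold lvl. rewrite !cls_nat. unfold pos. rewrite Nat.pow_succ_r'.
  split; [split|lia].
  - rewrite F3. apply (Hr L).
  - rewrite Nat.mod_small by lia. auto.
Qed.

Lemma determ b r s d d' j : bits b -> resid r -> resid s -> toep b r d -> toep b s d' ->
  (forall w, w < 2 ^ S j -> d (Z.of_nat w) = d' (Z.of_nat w)) -> r j = s j.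
Proof.
  intros Hb Hr Hs Hd Hd'. induction j; intros Hag.
  - rewrite !resid0; auto.
  - assert (IH : r j = s j). { apply IHj. intros w Hw. apply Hag. rewrite (Nat.pow_succ_r' 2 (S j)). lia. }
    destruct (Nat.eq_dec (r (S j)) (s (S j))) as [E|E]; auto. exfalso.
    destruct (pos_lvl r (S j) Hr) as [[HL1 HL2] Hw].
    set (w := pos r (S j)) in *.
    assert (Hv1 : d (Z.of_nat w) = a_of b (S j)) by (apply Hd; split; auto).
    assert (Hv2 : d' (Z.of_nat w) = a_of b j).
    { apply Hd'. split.
      - apply cls_nat. rewrite <- IH. apply cls_nat. apply (cls_down r _ j (S j) Hr (Nat.le_succ_diag_r j) HL1).
      - rewrite cls_nat. rewrite cls_nat in HL1. lia. }
    apply (a_neq b j Hb). rewrite <- Hv1, <- Hv2. symmetry. apply Hag; auto.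
Qed.

Lemma ZL (M S0 v T z : Z) : (0 < M -> 0 <= S0 < M -> (S0 - v) mod M = T ->
  ((z + v) mod M = S0 <-> z mod M = T))%Z.
Proof.
  intros HM HS HT. rewrite (Zmod_small_iff _ S0 M HM HS). rewrite <- HT.
  rewrite !Zcong by auto. split; intros [k Hk]; exists k; lia.
Qed.

Lemma choice_nat {A : Type} (P : nat -> A -> Prop) : (forall j, exists x, P j x) -> exists f, forall j, P j (f j).
Proof.
  intros H. exists (fun j => proj1_sig (constructive_indefinite_description _ (H j))).
  intros j. apply (proj2_sig (constructive_indefinite_description _ (H j))).
Qed.

Lemma XT_shift b v c : XT b c -> XT b (Defs.shift v c).
Proof.
  intros [H3 [r [Hr Hc]]]. split.
  { intros z. apply H3. }
  set (r' := fun j => Z.to_nat ((Z.of_nat (r j) - v) mod P2 j)).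
  assert (Hr'Z : forall j, Z.of_nat (r' j) = ((Z.of_nat (r j) - v) mod P2 j)%Z).
  { intros j. unfold r'. rewrite Z2Nat.id. auto. apply Z.mod_pos_bound, P2_pos. }
  assert (Hiff : forall z j, cls r' z j <-> cls r (z + v)%Z j).
  { intros z j. unfold cls. rewrite Hr'Z. symmetry. apply ZL. apply P2_pos.
    destruct (Hr j) as [H _]. unfold P2. lia. auto. }
  exists r'. split.
  - intros j. split.
    + pose proof (Z.mod_pos_bound (Z.of_nat (r j) - v) (P2 j) (P2_pos j)).
      rewrite <- Hr'Z in H. unfold P2 in H. lia.
    + apply Nat2Z.inj. rewrite Nat2Z.inj_mod, !Hr'Z. fold (P2 j).
      rewrite Z.mod_mod_divide.
      2: { rewrite P2_S. exists 2%Z. lia. }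
      apply Zcong. apply P2_pos.
      destruct (Hr j) as [_ H]. assert (H' : (Z.of_nat (r (S j)) mod P2 j = Z.of_nat (r j) mod P2 j)%Z).
      { unfold P2. rewrite <- !Nat2Z.inj_mod. rewrite H. rewrite Nat.mod_small; auto. apply Hr. }
      apply Zcong in H'. destruct H' as [k Hk]. exists k. lia. apply P2_pos.
  - intros j z [H1 H2]. unfold Defs.shift. apply Hc. split.
    + apply Hiff; auto.
    + rewrite <- Hiff; auto.
Qed.

Lemma XT_closed b : bits b -> closed_set 3 (XT b).
Proof.
  intros Hb c Hc Hwin. split; auto.
  assert (H : forall j, exists p : config * (nat -> nat), resid (snd p) /\ toep b (snd p) (fst p) /\
     forall z, (- Z.of_nat (2 ^ S j) <= z <= Z.of_nat (2 ^ S j))%Z -> fst p z = c z).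
  { intros j. destruct (Hwin (2 ^ S j)) as [d [[_ [s [Hs Hd]]] Hag]]. exists (d, s). simpl. auto. }
  destruct (choice_nat _ H) as [f Hf].
  set (r := fun j => snd (f j) j).
  assert (Hcons : forall i j, i <= j -> snd (f j) i = r i).
  { intros i j Hij. unfold r. destruct (Hf i) as (A1 & A2 & A3). destruct (Hf j) as (B1 & B2 & B3).
    apply (determ b _ _ (fst (f j)) (fst (f i)) i Hb B1 A1 B2 A2).
    intros w Hw. rewrite A3, B3; auto.
    - assert (2 ^ S i <= 2 ^ S j) by (apply Nat.pow_le_mono_r; lia). lia.
    - lia. }
  exists r. split.
  - intros j. split.
    + unfold r. apply (proj1 (Hf j)).
    + rewrite <- (Hcons j (S j)) by lia. unfold r. apply (proj1 (Hf (S j))).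
  - intros j z [H1 H2].
    set (K := S j + Z.to_nat (Z.abs z)).
    destruct (Hf K) as (B1 & B2 & B3).
    rewrite <- B3.
    + apply B2. unfold lvl, cls in *. rewrite !Hcons by lia. auto.
    + assert (K < 2 ^ K) by (apply Nat.pow_gt_lin_r; lia).
      assert (2 ^ K <= 2 ^ S K) by (apply Nat.pow_le_mono_r; lia). lia.
Qed.

Lemma hole_K b J s : bits b -> s < 3 -> exists K, J <= K /\ a_of b K = s.
Proof.
  intros Hb Hs. destruct (Nat.eq_dec s 2).
  - exists (2 * J). split. lia. subst. apply a_of_2m.
  - destruct (Nat.eq_dec (b J) s).
    + exists (4 * J + 1). split. lia. rewrite a_of_4. auto.
    + exists (4 * J + 3). split. lia. rewrite a_of_4'. specialize (Hb J). lia.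
Qed.

Lemma shift_res s m T i : resid s -> i <= m ->
  ((Z.of_nat (s i) - (Z.of_nat (s m) - Z.of_nat T)) mod P2 i = Z.of_nat (T mod 2 ^ i))%Z.
Proof.
  intros Hs Him. unfold P2. rewrite Nat2Z.inj_mod. fold (P2 i).
  apply Zcong. apply P2_pos.
  assert (E : (Z.of_nat (s m) mod P2 i = Z.of_nat (s i) mod P2 i)%Z).
  { unfold P2. rewrite <- !Nat2Z.inj_mod. rewrite resid_le by auto. rewrite Nat.mod_small; auto. apply Hs. }
  apply Zcong in E. destruct E as [k Hk]. exists (- k)%Z. lia. apply P2_pos.
Qed.

Lemma cls_transport s T m z i : resid s -> i <= m ->
  (cls s (z + (Z.of_nat (s m) - Z.of_nat T)) i <-> (z mod P2 i = Z.of_nat (T mod 2 ^ i))%Z).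
Proof.
  intros Hs Him. unfold cls. apply ZL. apply P2_pos. destruct (Hs i). unfold P2. lia.
  apply shift_res; auto.
Qed.

Lemma match_lvl b r s y T m z L : resid r -> resid s -> toep b s y -> S L <= m ->
  (forall i, i <= S L -> T mod 2 ^ i = r i) -> lvl r z L ->
  y (z + (Z.of_nat (s m) - Z.of_nat T))%Z = a_of b L.
Proof.
  intros Hr Hs Hy HLm HT [H1 H2]. apply Hy. split.
  - rewrite (cls_transport s T m z L Hs) by lia. rewrite HT by lia. auto.
  - rewrite (cls_transport s T m z (S L) Hs) by lia. rewrite HT by lia. auto.
Qed.

Lemma match_hole b r s y K z : resid r -> resid s -> toep b s y ->
  (forall i, cls r z i) ->
  y (z + (Z.of_nat (s (S K)) - Z.of_nat (flip (2 ^ K) (r (S K)))))%Z = a_of b K.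
Proof.
  intros Hr Hs Hy Hz.
  destruct (Hr (S K)) as [H1 _]. rewrite Nat.pow_succ_r' in H1.
  destruct (flip_props (2 ^ K) (r (S K)) (pow2_pos K) H1) as (F1 & F2 & F3).
  apply Hy. split.
  - rewrite (cls_transport s _ (S K) z K Hs) by lia. rewrite F3. rewrite (proj2 (Hr K)). apply Hz.
  - rewrite (cls_transport s _ (S K) z (S K) Hs) by lia.
    rewrite Nat.mod_small by (rewrite Nat.pow_succ_r'; lia). rewrite (Hz (S K)). lia.
Qed.

Lemma window_unique r z1 z2 J (n : nat) : (2 * Z.of_nat n < P2 J)%Z ->
  (- Z.of_nat n <= z1 <= Z.of_nat n)%Z -> (- Z.of_nat n <= z2 <= Z.of_nat n)%Z ->
  cls r z1 J -> cls r z2 J -> z1 = z2.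
Proof.
  intros HJ H1 H2 C1 C2. unfold cls in *. rewrite <- C2 in C1.
  apply Zcong in C1. destruct C1 as [k Hk]. pose proof (P2_pos J).
  assert (k = 0 \/ k >= 1 \/ k <= -1)%Z as [->|[Hk1|Hk1]] by lia; nia. apply P2_pos.
Qed.

Lemma XT_minimal b : bits b -> forall Y : config -> Prop, subshift 3 Y -> (exists c, Y c) ->
    (forall c, Y c -> XT b c) -> forall c, XT b c -> Y c.
Proof.
  intros Hb Y [HYf [HYc HYs]] [y Hy] HYX c [Hc3 [r [Hr Hrc]]].
  destruct (HYX y Hy) as [_ [s [Hs Hsy]]].
  apply HYc. exact Hc3. intros n.
  set (J := S (2 * n)).
  assert (HJ : (2 * Z.of_nat n < P2 J)%Z).
  { unfold P2, J. assert (S (2 * n) < 2 ^ S (2 * n)) by (apply Nat.pow_gt_lin_r; lia). lia. }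
  assert (Hex : exists T m, forall z, (- Z.of_nat n <= z <= Z.of_nat n)%Z ->
            y (z + (Z.of_nat (s m) - Z.of_nat T))%Z = c z).
  { destruct (classic (exists zs, (- Z.of_nat n <= zs <= Z.of_nat n)%Z /\ cls r zs J)) as [[zs [Hzs Czs]]|Hno].
    - destruct (classic (forall i, cls r zs i)) as [Hhole|Hnh].
      + destruct (hole_K b J (c zs) Hb (Hc3 zs)) as [K [HK1 HK2]].
        exists (flip (2 ^ K) (r (S K))), (S K). intros z Hz.
        destruct (Z.eq_dec z zs) as [->|Hne].
        * rewrite (match_hole b r s y K zs Hr Hs Hsy Hhole). auto.
        * assert (~ cls r z J) by (intros C; apply Hne; eapply window_unique; eauto).
          destruct (lvl_exists r z J Hr H) as [L [HL1 HL2]].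
          rewrite (match_lvl b r s y _ (S K) z L Hr Hs Hsy); [symmetry; apply Hrc; auto|lia| |auto].
          intros i Hi. destruct (Hr (S K)) as [H1 _]. rewrite Nat.pow_succ_r' in H1.
          destruct (flip_props (2 ^ K) (r (S K)) (pow2_pos K) H1) as (F1 & F2 & F3).
          rewrite <- (natmod_le _ i K) by lia. rewrite F3, (proj2 (Hr K)). apply resid_le; auto. lia.
      + assert (exists i, ~ cls r zs i) as [i Hi] by (apply not_all_ex_not; auto).
        destruct (lvl_exists r zs i Hr Hi) as [Ls [_ HLs]].
        exists (r (J + S Ls)), (J + S Ls). intros z Hz.
        destruct (classic (cls r z J)) as [C|C].
        * assert (z = zs) by (eapply window_unique; eauto). subst z.
          rewrite (match_lvl b r s y _ _ zs Ls Hr Hs Hsy); [symmetry; apply Hrc; auto|lia| |auto].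
          intros i' Hi'. apply resid_le; auto. lia.
        * destruct (lvl_exists r z J Hr C) as [L [HL1 HL2]].
          rewrite (match_lvl b r s y _ _ z L Hr Hs Hsy); [symmetry; apply Hrc; auto|lia| |auto].
          intros i' Hi'. apply resid_le; auto. lia.
    - exists (r J), J. intros z Hz.
      assert (C : ~ cls r z J) by (intros C; apply Hno; eauto).
      destruct (lvl_exists r z J Hr C) as [L [HL1 HL2]].
      rewrite (match_lvl b r s y _ _ z L Hr Hs Hsy); [symmetry; apply Hrc; auto|lia| |auto].
      intros i' Hi'. apply resid_le; auto. lia. }
  destruct Hex as [T [m Hm]].
  exists (Defs.shift (Z.of_nat (s m) - Z.of_nat T) y). split.
  - apply HYs. auto.
  - intros z Hz. unfold Defs.shift. apply Hm. lia.
Qed.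

Definition rho (g : nat -> nat) (j : nat) := if Nat.even j then g (j / 2) else 1 - g (j / 2).

Fixpoint rr (g : nat -> nat) (j : nat) : nat :=
  match j with 0 => 0 | S j => rr g j + rho g j * 2 ^ j end.

Lemma rho_le g j : bits g -> rho g j <= 1.
Proof. intros Hg. unfold rho. specialize (Hg (j / 2)). destruct (Nat.even j); lia. Qed.

Lemma rr_resid g : bits g -> resid (rr g).
Proof.
  intros Hg. assert (H : forall j, rr g j < 2 ^ j).
  { induction j; simpl. lia. pose proof (rho_le g j Hg). nia. }
  intros j. split; auto. simpl. rewrite Nat.Div0.mod_add. apply Nat.mod_small; auto.
Qed.

Lemma rho_2m g m : rho g (2 * m) = g m.
Proof. unfold rho. rewrite even_2m. f_equal. rewrite Nat.mul_comm, Nat.div_mul; lia. Qed.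

Lemma rho_2m1 g m : rho g (2 * m + 1) = 1 - g m.
Proof.
  unfold rho. replace (2 * m + 1) with (1 + 2 * m) by lia. rewrite even_2m1. f_equal. f_equal.
  symmetry. apply Nat.div_unique with 1; lia.
Qed.

Lemma rr_nohole g z : bits g -> exists L, lvl (rr g) z L.
Proof.
  intros Hg. set (m := Z.to_nat (Z.abs z)).
  assert (Hm : (Z.abs z < Z.of_nat (2 ^ (2 * m)))%Z).
  { assert (m < 2 ^ m) by (apply Nat.pow_gt_lin_r; lia).
    assert (2 ^ m <= 2 ^ (2 * m)) by (apply Nat.pow_le_mono_r; lia). lia. }
  cut (~ cls (rr g) z (2 * m + 2)).
  { intros C. destruct (lvl_exists _ z (2 * m + 2) (rr_resid g Hg) C) as [L [_ HL]]. eauto. }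
  unfold cls, P2. set (Q := 2 ^ (2 * m)) in *.
  assert (E4 : 2 ^ (2 * m + 2) = 4 * Q) by (unfold Q; rewrite Nat.pow_add_r; simpl; lia).
  rewrite E4.
  assert (Hr : Q <= rr g (2 * m + 2) < 3 * Q).
  { replace (2 * m + 2) with (S (S (2 * m))) by lia.
    change (rr g (S (S (2*m)))) with (rr g (2*m) + rho g (2*m) * 2^(2*m) + rho g (S (2*m)) * 2^(S (2*m))).
    replace (S (2 * m)) with (2 * m + 1) by lia. rewrite rho_2m, rho_2m1.
    assert (rr g (2 * m) < Q) by apply (rr_resid g Hg).
    assert (2 ^ (2 * m + 1) = 2 * Q) by (unfold Q; rewrite Nat.pow_add_r; simpl; lia).
    specialize (Hg m). assert (g m = 0 \/ g m = 1) as [E|E] by lia; rewrite E; lia. }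
  destruct (Z_le_gt_dec 0 z).
  - rewrite Z.mod_small by lia. lia.
  - rewrite <- (Z.mod_add z 1 (Z.of_nat (4 * Q))) by lia. rewrite Z.mod_small by lia. lia.
Qed.

Definition lev (g : nat -> nat) (z : Z) : nat := epsilon (inhabits 0) (lvl (rr g) z).

Lemma lev_spec g z : bits g -> lvl (rr g) z (lev g z).
Proof. intros Hg. unfold lev. apply epsilon_spec. apply rr_nohole; auto. Qed.

Definition cpt (b g : nat -> nat) : config := fun z => a_of b (lev g z).

Lemma cpt_XT b g : bits b -> bits g -> XT b (cpt b g).
Proof.
  intros Hb Hg. split.
  - intros z. apply a_of_lt3; auto.
  - exists (rr g). split. apply rr_resid; auto.
    intros j z Hj. unfold cpt. f_equal. apply (lvl_unique (rr g) z); [apply rr_resid; auto| apply lev_spec; auto | auto].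
Qed.

Definition ifz (t x y : nat) := match t with 0 => x | _ => y end.

Lemma c_ifz' o k Q g1 g2 g3 : CompOn o k Q g1 -> CompOn o k Q g2 -> CompOn o k Q g3 ->
  CompOn o k Q (fun v => ifz (g1 v) (g2 v) (g3 v)).
Proof. intros. apply (tc3 o k Q ifz); auto. apply c_ifz. Qed.

Lemma c_add' o k Q g1 g2 : CompOn o k Q g1 -> CompOn o k Q g2 -> CompOn o k Q (fun v => g1 v + g2 v).
Proof. intros. apply (tc2 o k Q Nat.add); auto. apply c_add. Qed.
Lemma c_sub' o k Q g1 g2 : CompOn o k Q g1 -> CompOn o k Q g2 -> CompOn o k Q (fun v => g1 v - g2 v).
Proof. intros. apply (tc2 o k Q Nat.sub); auto. apply c_sub. Qed.
Lemma c_mul' o k Q g1 g2 : CompOn o k Q g1 -> CompOn o k Q g2 -> CompOn o k Q (fun v => g1 v * g2 v).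
Proof. intros. apply (tc2 o k Q Nat.mul); auto. apply c_mul. Qed.
Lemma c_eqn' o k Q g1 g2 : CompOn o k Q g1 -> CompOn o k Q g2 -> CompOn o k Q (fun v => eqn (g1 v) (g2 v)).
Proof. intros. apply (tc2 o k Q eqn); auto. apply c_eqn. Qed.
Lemma c_divp' o k Q g1 g2 : CompOn o k Q g1 -> CompOn o k Q g2 -> CompOn o k Q (fun v => g1 v / 2 ^ g2 v).
Proof. intros. apply (tc2 o k Q (fun a b => a / 2 ^ b)); auto. apply c_divp. Qed.
Lemma c_modp' o k Q g1 g2 : CompOn o k Q g1 -> CompOn o k Q g2 -> CompOn o k Q (fun v => g1 v mod 2 ^ g2 v).
Proof. intros. apply (tc2 o k Q (fun a b => a mod 2 ^ b)); auto. apply c_modp. Qed.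
Lemma c_pow2' o k Q g1 : CompOn o k Q g1 -> CompOn o k Q (fun v => 2 ^ g1 v).
Proof. intros. apply (tc1 o k Q (fun a => 2 ^ a)); auto. apply c_pow2. Qed.
Lemma c_succ' o k Q g1 : CompOn o k Q g1 -> CompOn o k Q (fun v => S (g1 v)).
Proof. intros. apply (tc1 o k Q S); auto. apply comp_succ. Qed.
Lemma c_pair' o k Q g1 g2 : CompOn o k Q g1 -> CompOn o k Q g2 -> CompOn o k Q (fun v => to_nat (g1 v, g2 v)).
Proof. intros. apply (tc2 o k Q (fun a b => to_nat (a, b))); auto. apply c_pair. Qed.
Lemma c_or' o k Q g1 : CompOn o k Q g1 -> CompOn o k Q (fun v => o (g1 v)).
Proof. intros. apply ctc1; auto. Qed.

Definition md (x j : nat) := x mod 2 ^ j.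
Definition dv (x j : nat) := x / 2 ^ j.
Lemma c_md' o k Q g1 g2 : CompOn o k Q g1 -> CompOn o k Q g2 -> CompOn o k Q (fun v => md (g1 v) (g2 v)).
Proof. apply c_modp'. Qed.
Lemma c_dv' o k Q g1 g2 : CompOn o k Q g1 -> CompOn o k Q g2 -> CompOn o k Q (fun v => dv (g1 v) (g2 v)).
Proof. apply c_divp'. Qed.
Lemma md_eq x j : md x j = x mod 2 ^ j. Proof. reflexivity. Qed.
Lemma dv_eq x j : dv x j = x / 2 ^ j. Proof. reflexivity. Qed.
Opaque md dv.

Ltac cauto := repeat (apply c_ifz' || apply c_add' || apply c_sub' || apply c_mul' || apply c_eqn'
   || apply c_divp' || apply c_modp' || apply c_pow2' || apply c_succ' || apply c_pair' || apply c_or' || apply c_md' || apply c_dv'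
   || (apply cproj; simpl; lia) || apply cconst).

Definition zmodn (n j : nat) : nat := Z.to_nat (zenum n mod P2 j).

Definition zmodn_ar (n j : nat) : nat :=
  md (ifz (md n 1) (dv (n + 1) 1) ((dv (n + 1) 1) * (2 ^ j - 1))) j.

Lemma zmodn_eq n j : zmodn n j = zmodn_ar n j.
Proof.
  unfold zmodn, zmodn_ar, zenum. rewrite !md_eq, !dv_eq. change (2 ^ 1) with 2.
  destruct (Nat.Even_or_Odd n) as [[k ->]|[k ->]].
  - rewrite even_2m. replace (2 * k / 2) with k by (rewrite Nat.mul_comm, Nat.div_mul; lia).
    replace (2 * k mod 2) with 0 by (rewrite Nat.mul_comm, Nat.Div0.mod_mul; lia).
    replace ((2 * k + 1) / 2) with k by (apply Nat.div_unique with 1; lia). simpl.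
    unfold P2. rewrite <- Nat2Z.inj_mod. lia.
  - replace (2 * k + 1) with (1 + 2 * k) by lia. rewrite even_2m1.
    replace ((1 + 2 * k) mod 2) with 1 by (apply Nat.mod_unique with k; lia).
    replace ((1 + 2 * k + 1) / 2) with (S k) by (apply Nat.div_unique with 0; lia). simpl ifz.
    apply Nat2Z.inj. rewrite Z2Nat.id by (apply Z.mod_pos_bound, P2_pos).
    rewrite Nat2Z.inj_mod. fold (P2 j). apply Zcong. apply P2_pos.
    pose proof (pow2_pos j). exists (- Z.of_nat (S k))%Z. unfold P2.
    rewrite Nat2Z.inj_add, Nat2Z.inj_mul, Nat2Z.inj_sub by lia. simpl Z.of_nat. nia.
Qed.

Lemma c_zmodn o k Q g1 g2 : CompOn o k Q g1 -> CompOn o k Q g2 -> CompOn o k Q (fun v => zmodn (g1 v) (g2 v)).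
Proof.
  intros H1 H2. apply (comp_ext o k Q Q (fun v => zmodn_ar (g1 v) (g2 v))).
  unfold zmodn_ar. cauto; auto.
  intros. split; auto. rewrite zmodn_eq. auto.
Qed.

Lemma cls_zmodn r n j : cls r (zenum n) j <-> zmodn n j = r j.
Proof.
  unfold cls, zmodn. pose proof (Z.mod_pos_bound (zenum n) (P2 j) (P2_pos j)). lia.
Qed.

Lemma zenum_2w w : zenum (2 * w) = Z.of_nat w.
Proof. unfold zenum. rewrite even_2m. f_equal. rewrite Nat.mul_comm, Nat.div_mul; lia. Qed.

Ltac cstep := match goal with
 | |- CompOn ?o ?k ?Q (fun v => ifz (@?a v) (@?b v) (@?c v)) => apply (c_ifz' o k Q a b c)
 | |- CompOn ?o ?k ?Q (fun v => (@?a v) + (@?b v)) => apply (c_add' o k Q a b)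
 | |- CompOn ?o ?k ?Q (fun v => (@?a v) - (@?b v)) => apply (c_sub' o k Q a b)
 | |- CompOn ?o ?k ?Q (fun v => (@?a v) * (@?b v)) => apply (c_mul' o k Q a b)
 | |- CompOn ?o ?k ?Q (fun v => eqn (@?a v) (@?b v)) => apply (c_eqn' o k Q a b)
 | |- CompOn ?o ?k ?Q (fun v => md (@?a v) (@?b v)) => apply (c_md' o k Q a b)
 | |- CompOn ?o ?k ?Q (fun v => dv (@?a v) (@?b v)) => apply (c_dv' o k Q a b)
 | |- CompOn ?o ?k ?Q (fun v => zmodn (@?a v) (@?b v)) => apply (c_zmodn o k Q a b)
 | |- CompOn ?o ?k ?Q (fun v => to_nat ((@?a v), (@?b v))) => apply (c_pair' o k Q a b)
 | |- CompOn ?o ?k ?Q (fun v => 2 ^ (@?a v)) => apply (c_pow2' o k Q a)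
 | |- CompOn ?o ?k ?Q (fun v => S (@?a v)) => apply (c_succ' o k Q a)
 | |- CompOn ?o ?k ?Q (fun v => ?o (@?a v)) => apply (c_or' o k Q a)
 | |- CompOn ?o ?k ?Q (fun v => nth ?i v 0) => apply (cproj o k Q i); simpl; lia
 | |- CompOn ?o ?k ?Q (fun v => ?n) => apply (cconst o k Q n)
 end.
Ltac cauto2 := try unfold Comp; repeat cstep.

Lemma md1 j : md j 1 = if Nat.even j then 0 else 1.
Proof.
  rewrite md_eq. change (2 ^ 1) with 2.
  destruct (Nat.Even_or_Odd j) as [[k ->]|[k ->]].
  - rewrite even_2m. rewrite Nat.mul_comm, Nat.Div0.mod_mul. auto.
  - replace (2 * k + 1) with (1 + 2 * k) by lia. rewrite even_2m1.
    symmetry. apply Nat.mod_unique with k; lia.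
Qed.

Definition fcond (O : nat -> nat) (n j x : nat) :=
  (zmodn n j - x) + (x - zmodn n j) + ifz (md j 1) (eqn (O n) 2) (1 - eqn (O n) 2).

Lemma fcond_zero O n j x : fcond O n j x = 0 ->
  zmodn n j = x /\ (Nat.even j = true -> O n <> 2) /\ (Nat.even j = false -> O n = 2).
Proof.
  unfold fcond. rewrite md1, eqn_spec. destruct (Nat.even j); simpl;
  destruct (Nat.eqb_spec (O n) 2); simpl; intros; repeat split; try lia; discriminate.
Qed.

Lemma fcond_zero' O n j x : zmodn n j = x -> (Nat.even j = true -> O n <> 2) ->
  (Nat.even j = false -> O n = 2) -> fcond O n j x = 0.
Proof.
  unfold fcond. rewrite md1, eqn_spec. intros H1 H2 H3. destruct (Nat.even j); simpl.
  - destruct (Nat.eqb_spec (O n) 2). exfalso; apply H2; auto. lia.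
  - rewrite H3 by auto. simpl. lia.
Qed.

Lemma even_S j : Nat.even (S j) = negb (Nat.even j).
Proof. rewrite Nat.even_succ, <- Nat.negb_even. auto. Qed.

Lemma decode b r c : bits b -> resid r -> toep b r c -> Comp (code c) 1 (fun v => r (hd 0 v)).
Proof.
  intros Hb Hr Hc. set (O := code c).
  assert (Hf : Comp O 3 (fun u => fcond O (nth 0 u 0) (nth 1 u 0) (nth 2 u 0))).
  { unfold fcond. cauto2. }
  set (Q := fun v : list nat => nth 1 v 0 = r (nth 0 v 0)).
  destruct (comp_mu_ex O 2 (fun _ => True) Q _ Hf) as [h [Hh Hh0]].
  { intros v Hl HQ. split; auto. exists (2 * pos r (S (nth 0 v 0))). cbv beta. cbn [nth].
    set (j := nth 0 v 0) in *. destruct (pos_lvl r (S j) Hr) as [[HL1 HL2] _].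
    assert (HO : O (2 * pos r (S j)) = a_of b (S j)).
    { unfold O, code. rewrite zenum_2w. apply Hc. split; auto. }
    apply fcond_zero'.
    - unfold Q in HQ. rewrite HQ. change (nth 0 v 0) with j. apply (proj1 (cls_zmodn r _ j)). rewrite zenum_2w.
      apply (cls_down r _ j (S j) Hr (Nat.le_succ_diag_r j) HL1).
    - intros E. rewrite HO. pose proof (a_of_odd b (S j) Hb). rewrite even_S, E in H. simpl in H. lia.
    - intros E. rewrite HO. apply a_of_even. rewrite even_S, E. auto. }
  assert (Hstep : forall v, length v = 2 -> Q v -> zmodn (h v) (S (nth 0 v 0)) = r (S (nth 0 v 0))).
  { intros v Hl HQ. specialize (Hh0 v Hl HQ). simpl in Hh0. apply fcond_zero in Hh0.
    destruct Hh0 as (H1 & H2 & H3). set (j := nth 0 v 0) in *.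
    apply cls_zmodn. destruct (Classical_Prop.classic (cls r (zenum (h v)) (S j))) as [C|C]; auto.
    exfalso. rewrite HQ in H1. apply cls_zmodn in H1.
    assert (HO : O (h v) = a_of b j) by (apply Hc; split; auto).
    destruct (Nat.even j) eqn:E.
    - apply H2; auto. rewrite HO. apply a_of_even; auto.
    - rewrite H3 in HO by auto. pose proof (a_of_odd b j Hb E). lia. }
  assert (Hs : CompOn O 2 Q (fun v => zmodn (h v) (S (nth 0 v 0)))).
  { apply c_zmodn; auto. cauto2. }
  pose proof (comp_prec O 0 (fun _ => True) Q (fun _ => 0) _ (comp_const O 0 0) Hs) as Hp.
  assert (Hpr : forall j, primrec (fun _ => 0) (fun v => zmodn (h v) (S (nth 0 v 0))) j [] = r j).
  { induction j; simpl. rewrite resid0; auto. rewrite IHj. apply (Hstep [j; r j]); reflexivity. }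
  eapply comp_ext. apply Hp. intros v Hl _. rewrite (len1 v Hl). simpl. split.
  - split; auto. intros m _. unfold Q. simpl. rewrite Hpr. auto.
  - apply Hpr.
Qed.

Lemma tc1' o k Q (F : nat -> nat) g : Comp o 1 (fun v => F (nth 0 v 0)) -> CompOn o k Q g ->
  CompOn o k Q (fun v => F (g v)).
Proof.
  intros H1 H2. apply tc1; auto. apply (comp_ext _ _ _ _ _ _ H1). intros v Hl _. split; auto.
  rewrite (len1 v Hl). auto.
Qed.

Ltac cauto3 := try unfold Comp in *; repeat (first [assumption | cstep]).

Fixpoint cntf (F : nat -> nat) (m i : nat) : nat :=
  match m with 0 => 0 | S m => cntf F m i + eqn (to_nat (m, F m)) i end.
Definition b_of F i := cntf F (S i) i.

Lemma pair_inj a b c d : to_nat (a, b) = to_nat (c, d) -> a = c /\ b = d.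
Proof. intros H. apply to_nat_inj in H. injection H; auto. Qed.

Lemma cntf_spec F m i : (cntf F m i = 0 /\ forall n, n < m -> to_nat (n, F n) <> i) \/
                        (cntf F m i = 1 /\ exists n, n < m /\ to_nat (n, F n) = i).
Proof.
  induction m; cbn [cntf].
  - left. split; auto. intros; lia.
  - rewrite eqn_spec. destruct (Nat.eqb_spec (to_nat (m, F m)) i) as [E|E].
    + destruct IHm as [[H1 H2]|[H1 [n [Hn Hn']]]].
      * right. split. lia. exists m. split; auto.
      * exfalso. rewrite <- E in Hn'. apply pair_inj in Hn'. destruct Hn'. lia.
    + destruct IHm as [[H1 H2]|[H1 [n [Hn Hn']]]].
      * left. split. lia. intros n Hn. destruct (Nat.eq_dec n m). subst; auto. apply H2; lia.
      * right. split. lia. exists n. split; auto.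
Qed.

Lemma b_of_bits F : bits (b_of F).
Proof. intros i. unfold b_of. destruct (cntf_spec F (S i) i) as [[-> _]|[-> _]]; lia. Qed.

Lemma b_of_pair F n m : b_of F (to_nat (n, m)) = if Nat.eqb (F n) m then 1 else 0.
Proof.
  unfold b_of. set (i := to_nat (n, m)).
  destruct (Nat.eqb_spec (F n) m) as [E|E];
  destruct (cntf_spec F (S i) i) as [[H1 H2]|[H1 [n' [Hn Hn']]]]; auto.
  - exfalso. apply (H2 n). pose proof (to_nat_non_decreasing n m). unfold i. lia. subst. auto.
  - exfalso. unfold i in Hn'. apply pair_inj in Hn'. destruct Hn'; subst. auto.
Qed.

Lemma c_cntf o : Comp o 2 (fun v => cntf o (nth 0 v 0) (nth 1 v 0)).
Proof.
  apply (cprec1 o (cntf o) (fun _ => 0) (fun n r y => r + eqn (to_nat (n, o n)) y)).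
  apply comp_const. cauto2. auto. auto.
Qed.

Lemma c_bof o k Q g : CompOn o k Q g -> CompOn o k Q (fun v => b_of o (g v)).
Proof.
  intros H. unfold b_of. apply (tc2 o k Q (cntf o) (fun v => S (g v)) g (c_cntf o)); auto.
  cauto2. auto.
Qed.

Lemma to_le A B : Comp B 1 (fun v => A (nth 0 v 0)) -> turing_le A B.
Proof. intros [p Hp]. exists p. intros n. apply (Hp [n]); auto. Qed.

Lemma mu_decode o F (bb : nat -> nat) : Comp o 1 (fun v => bb (nth 0 v 0)) ->
  (forall i, bb i = b_of F i) -> Comp o 1 (fun v => F (nth 0 v 0)).
Proof.
  intros Hbb Hb.
  apply (comp_mu o 1 (fun _ => True) (fun _ => True)
     (fun u => 1 - bb (to_nat (nth 1 u 0, nth 0 u 0)))).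
  - apply (c_sub' o 2 _ (fun _ => 1)). cauto2.
    apply (tc1' o 2 _ bb (fun u => to_nat (nth 1 u 0, nth 0 u 0))). exact Hbb. cauto2.
  - intros v Hl _. cbv beta. cbn [nth]. split; auto. rewrite Hb, b_of_pair, Nat.eqb_refl. split. auto.
    intros m Hm. rewrite Hb, b_of_pair. destruct (Nat.eqb_spec (F (nth 0 v 0)) m). lia. lia.
Qed.

Definition flip_ar (M R : nat) := ifz (M - R) (R - M) (R + M).
Lemma flip_eq M R : flip M R = flip_ar M R.
Proof. unfold flip, flip_ar, ifz. destruct (Nat.ltb_spec R M); destruct (M - R) eqn:E; lia. Qed.

Lemma P1 D c : XT (b_of D) c -> turing_le D (code c).
Proof.
  intros [_ [r [Hr Hc]]]. pose proof (b_of_bits D) as Hb.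
  pose proof (decode _ r c Hb Hr Hc) as Hd.
  apply to_le.
  apply (mu_decode _ D (fun i => code c (2 * flip_ar (2 ^ (4 * i + 1)) (r (S (4 * i + 1)))))).
  - assert (Hrr : Comp (code c) 1 (fun v => r (S (4 * nth 0 v 0 + 1)))).
    { apply (tc1 _ 1 _ r (fun v => S (4 * nth 0 v 0 + 1))). exact Hd. cauto2. }
    unfold flip_ar. cauto3.
  - intros i. rewrite <- flip_eq. fold (pos r (4 * i + 1)). unfold code. rewrite zenum_2w.
    rewrite (Hc (4 * i + 1)). apply a_of_4. apply pos_lvl; auto.
Qed.

Ltac cauto4 := try unfold Comp in *; repeat (first [assumption | cstep |
  match goal with
  | H : CompOn ?o 1 (fun _ => True) (fun v => ?F (nth 0 v 0)) |- CompOn ?o ?k ?Q (fun v => ?F (@?a v)) =>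
      apply (tc1' o k Q F a H)
  end]).

Lemma hd_nth o F : Comp o 1 (fun v => F (hd 0 v)) -> Comp o 1 (fun v => F (nth 0 v 0)).
Proof. intros H. apply (comp_ext _ _ _ _ _ _ H). intros v Hl _. rewrite (len1 v Hl). auto. Qed.

Lemma cpt_toep b g : bits g -> toep b (rr g) (cpt b g).
Proof.
  intros Hg j z Hj. unfold cpt. f_equal.
  apply (lvl_unique (rr g) z); [apply rr_resid; auto| apply lev_spec; auto | auto].
Qed.

Lemma rho_ar g j : rho g j = ifz (md j 1) (g (dv j 1)) (1 - g (dv j 1)).
Proof. unfold rho. rewrite md1, dv_eq. change (2 ^ 1) with 2. destruct (Nat.even j); auto. Qed.

Lemma a_of_ar b L : a_of b L = ifz (md L 1) 2 (ifz (md (dv L 1) 1) (b (dv L 2)) (1 - b (dv L 2))).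
Proof.
  unfold a_of. rewrite !md1, !dv_eq. change (2 ^ 1) with 2. change (2 ^ 2) with 4.
  destruct (Nat.even L); auto. destruct (Nat.even (L / 2)); auto.
Qed.

Lemma rr_bit g i : bits g -> dv (rr g (2 * i + 1)) (2 * i) = g i.
Proof.
  intros Hg. rewrite dv_eq. replace (2 * i + 1) with (S (2 * i)) by lia.
  change (rr g (S (2 * i))) with (rr g (2 * i) + rho g (2 * i) * 2 ^ (2 * i)).
  rewrite rho_2m. symmetry. apply Nat.div_unique with (rr g (2 * i)).
  apply (rr_resid g Hg). lia.
Qed.

Definition cE (D E : nat -> nat) : config := cpt (b_of D) (b_of E).

Lemma P2red D E : turing_le D E -> turing_le (code (cE D E)) E.
Proof.
  intros HDE. set (g := b_of E). set (b := b_of D).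
  assert (Hb : Comp E 1 (fun v => b (nth 0 v 0))).
  { apply (comp_reduce E D 1 _ _ HDE). apply (c_bof D 1 _ (fun v => nth 0 v 0)). cauto2. }
  assert (Hg : Comp E 1 (fun v => g (nth 0 v 0))).
  { apply (c_bof E 1 _ (fun v => nth 0 v 0)). cauto2. }
  assert (Hrho : Comp E 1 (fun v => rho g (nth 0 v 0))).
  { apply (comp_ext E 1 (fun _ => True) _ (fun v => ifz (md (nth 0 v 0) 1) (g (dv (nth 0 v 0) 1)) (1 - g (dv (nth 0 v 0) 1)))).
    cauto4. intros. split; auto. rewrite rho_ar. auto. }
  assert (Hrr : Comp E 1 (fun v => rr g (nth 0 v 0))).
  { apply hd_nth. apply (cprec0 E (rr g) 0 (fun n r => r + rho g n * 2 ^ n)). cauto4. auto. auto. }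
  set (Lz := fun n => lev g (zenum n)).
  assert (Hlev : Comp E 1 (fun v => Lz (nth 0 v 0))).
  { apply (comp_mu E 1 (fun _ => True) (fun _ => True)
      (fun u => eqn (zmodn (nth 1 u 0) (S (nth 0 u 0))) (rr g (S (nth 0 u 0))))).
    cauto4. intros v Hl _. cbv beta. cbn [nth]. split; auto.
    pose proof (b_of_bits E) as HgB. fold g in HgB.
    destruct (lev_spec g (zenum (nth 0 v 0)) HgB) as [C1 C2]. unfold Lz. split.
    - rewrite eqn_spec. destruct (Nat.eqb_spec (zmodn (nth 0 v 0) (S (lev g (zenum (nth 0 v 0)))))
         (rr g (S (lev g (zenum (nth 0 v 0)))))); auto. exfalso. apply C2. apply cls_zmodn. auto.
    - intros m Hm. rewrite eqn_spec. rewrite (proj1 (cls_zmodn (rr g) (nth 0 v 0) (S m))). rewrite Nat.eqb_refl. lia.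
      apply (cls_down (rr g) _ (S m) (lev g (zenum (nth 0 v 0)))). apply rr_resid; auto. lia. auto. }
  apply to_le.
  apply (comp_ext E 1 (fun _ => True) _ (fun v => ifz (md (Lz (nth 0 v 0)) 1) 2
     (ifz (md (dv (Lz (nth 0 v 0)) 1) 1) (b (dv (Lz (nth 0 v 0)) 2)) (1 - b (dv (Lz (nth 0 v 0)) 2))))).
  cauto4. intros. split; auto. rewrite <- a_of_ar. auto.
Qed.

Lemma P3 D E : turing_le E (code (cE D E)).
Proof.
  set (g := b_of E). set (b := b_of D).
  pose proof (b_of_bits E) as HgB. pose proof (b_of_bits D) as HbB. fold g in HgB. fold b in HbB.
  pose proof (decode b (rr g) (cE D E) HbB (rr_resid g HgB) (cpt_toep b g HgB)) as Hd.
  apply hd_nth in Hd.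
  apply to_le. apply (mu_decode _ E (fun i => dv (rr g (2 * i + 1)) (2 * i))).
  cauto4. intros i. rewrite rr_bit; auto.
Qed.

Theorem theorem2 :
  forall D : nat -> nat,
  exists (k : nat) (X : config -> Prop),
    minimal_subshift k X /\
    (forall c : config, X c -> turing_le D (code c)) /\
    (forall E : nat -> nat, turing_le D E ->
       exists c : config, X c /\ turing_eq (code c) E).
Proof.
  intros D. pose proof (b_of_bits D) as HbB.
  exists 3, (XT (b_of D)). split; [|split].
  - split; [split; [|split]|split].
    + intros c [H _]. auto.
    + apply XT_closed; auto.
    + intros v c H. apply XT_shift; auto.
    + exists (cE D D). apply cpt_XT; auto; apply b_of_bits.
    + apply XT_minimal; auto.
  - intros c Hc. apply P1; auto.
  - intros E HDE. exists (cE D E). split.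
    + apply cpt_XT; auto; apply b_of_bits.
    + split. apply P2red; auto. apply P3.
Qed.
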